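(* Let $m\ge1$, $n=2^m-1$ and $\iota,\kappa\in\dot F^m$. Every element $\bar c$ of the linear span $\langle R_\iota,R_\kappa\rangle$ of $R_\iota\cup R_\kappa$ satisfies $$c_\alpha+c_{\alpha+\iota}+c_{\alpha+\kappa}+c_{\alpha+\iota+\kappa}=0 \quad\text{for all } \alpha\in F^m\setminus\langle\iota,\kappa\rangle,$$ where $\langle\iota,\kappa\rangle$ is the linear span of $\iota,\kappa$ in $F^m$.
   Context: $F^m$ denotes the vector space of binary $m$-tuples over $GF(2)$, and $\dot F^m := F^m\setminus\{0^m\}$. The coordinates of words $\bar c\in F^n$ ($n=2^m-1$) are indexed by the elements of $\dot F^m$, $\bar c=\{c_\alpha\}_{\alpha\in\dot F^m}$. The Hamming code is $H:=\{\bar c\in F^n \mid \sum_{\alpha\in\dot F^m} c_\alpha\alpha = 0^m\}$. For $\iota\in\dot F^m$, $R_\iota := \{\bar c\in H \mid c_\alpha=c_{\alpha+\iota} \text{ for all } \alpha\in F^m\setminus\{0^m,\iota\}\}$; it is a linear subspace of $F^n$. *)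

(* Defs.v *)
From HB Require Import structures.
From mathcomp Require Import all_boot all_order all_algebra.
Set Implicit Arguments. Unset Strict Implicit. Unset Printing Implicit Defensive.
Import GRing.Theory.
Local Open Scope ring_scope.

Definition Fm (m : nat) := 'rV['F_2]_m.
Definition dotF (m : nat) := {x : 'rV['F_2]_m | x != 0}.

(* binary words of length n = 2^m - 1, coordinates indexed by dot F^m *)
Notation word m := {ffun dotF m -> 'F_2} (only parsing).

(* coordinate c_alpha for alpha in F^m (only meaningful for alpha != 0;
   returns 0 at alpha = 0, which is never used in the statement) *)
Definition cw (m : nat) (c : word m) (a : 'rV['F_2]_m) : 'F_2 :=
  oapp c 0 (insub a : option (dotF m)).

Definition hamming (m : nat) (c : word m) : Prop :=
  \sum_(a : dotF m) c a *: val a = 0.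

Definition Rsub (m : nat) (iota : 'rV['F_2]_m) (c : word m) : Prop :=
  hamming c /\
  forall a : 'rV['F_2]_m, a != 0 -> a != iota -> cw c a = cw c (a + iota).

Inductive span_of (m : nat) (P : word m -> Prop) : word m -> Prop :=
| span_zero : span_of P 0
| span_gen : forall x, P x -> span_of P x
| span_lin : forall (k : 'F_2) x y, span_of P x -> span_of P y -> span_of P [ffun a => k * x a + y a].

(* Main.v *)
Require Import Defs.
From HB Require Import structures.
From mathcomp Require Import all_boot all_order all_algebra.
Local Open Scope ring_scope.
Import GRing.Theory.
From mathcomp Require Import ring.

Lemma addxx m (x : 'rV['F_2]_m) : x + x = 0.
Proof.
have h : (2%:R : 'F_2) = 0 by apply/eqP.
by rewrite -mulr2n -scaler_nat h scale0r.
Qed.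

Lemma cw_lin m (k : 'F_2) (x y : word m) b :
  cw [ffun a => k * x a + y a] b = k * cw x b + cw y b.
Proof. by rewrite /cw; case: insubP => [u _ _|_] /=; rewrite ?ffunE ?mulr0 ?addr0. Qed.

Lemma cw0 m b : cw (0 : word m) b = 0.
Proof. by rewrite /cw; case: insubP => [u _ _|_] /=; rewrite ?ffunE. Qed.

Lemma F2x (p : 'F_2) : p + p = 0.
Proof. by rewrite -mulr2n -mulr_natl (_ : 2%:R = 0 :> 'F_2) ?mul0r //; apply/eqP. Qed.
Lemma F2a (p q : 'F_2) : p + p + q + q = 0.
Proof. by rewrite F2x add0r F2x. Qed.
Lemma F2b (p q : 'F_2) : p + q + p + q = 0.
Proof. by rewrite [p + q + p]addrAC F2a. Qed.
Lemma lin4 (k p1 p2 p3 p4 q1 q2 q3 q4 : 'F_2) :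
  k * p1 + q1 + (k * p2 + q2) + (k * p3 + q3) + (k * p4 + q4) =
  k * (p1 + p2 + p3 + p4) + (q1 + q2 + q3 + q4).
Proof. ring. Qed.

Theorem lemma2 (m : nat) (iota kappa : 'rV['F_2]_m) :
  (1 <= m)%N -> iota != 0 -> kappa != 0 ->
  forall c : word m,
    span_of (fun x => Rsub iota x \/ Rsub kappa x) c ->
    forall a : 'rV['F_2]_m, a \notin <<[:: iota; kappa]>>%VS ->
      cw c a + cw c (a + iota) + cw c (a + kappa) + cw c (a + iota + kappa) = 0.
Proof.
move=> _ _ _ c Hc a Ha.
set S := <<[:: iota; kappa]>>%VS.
have iS : iota \in S by apply: memv_span; rewrite inE eqxx.
have kS : kappa \in S by apply: memv_span; rewrite !inE eqxx orbT.
have nz : forall u, u \in S -> a + u != 0.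
  move=> u uS; apply/negP=> /eqP E; move/negP: Ha; apply.
  by rewrite (_ : a = - u) ?memvN // -(addrK u a) E sub0r.
have ne : forall u w, u \in S -> w \in S -> a + u != w.
  move=> u w uS wS; apply/negP=> /eqP E; move/negP: Ha; apply.
  by rewrite (_ : a = w - u) ?memvB // -E addrK.
have a0 : a = a + 0 by rewrite addr0.
elim: Hc => [|x [[_ Hx]|[_ Hx]]|k x y _ IHx _ IHy].
- by rewrite !cw0 !addr0.
- rewrite Hx; last 2 first.
    by rewrite {1}a0 nz ?mem0v.
    by rewrite {1}a0 ne ?mem0v.
  rewrite [cw x (a + kappa)]Hx ?nz ?ne // [a + kappa + iota]addrAC.
  by apply: F2a.
- rewrite Hx; last 2 first.
    by rewrite {1}a0 nz ?mem0v.
    by rewrite {1}a0 ne ?mem0v.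
  rewrite [cw x (a + iota)]Hx ?nz ?ne //.
  by apply: F2b.
- rewrite !cw_lin.
  by rewrite lin4 IHx IHy mulr0 addr0.
Qed.
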